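(* Let $\delta\in(0,1)$, $k\ge2$, let $G=S_k$ be the star with hub $h$ and $k$ leaves on vertex set $V$ ($n=k+1$ vertices), and $\mathcal H=\{\{i,j\}:\{i,j\}\in E(S_k)\}$. Suppose that one of the sender $S$, receiver $R$ is the hub and the other is a leaf, and the witness set is $W=V\setminus\{S,R\}$ (the remaining $k-1$ leaves). Then $$b_{\mathrm{eff}}=\delta+f(k,\delta),\qquad f(k,\delta)=\frac{2(k+1)(k-1)}{3k}\,\delta^2,$$ where $f>0$, $\partial f/\partial k>0$ and $\partial^2 f/\partial k^2<0$ (viewing $k$ as a real variable $\ge 1$). Hence the number of equilibrium partitions $N(b_{\mathrm{eff}})$ is non-increasing in $n$, and the marginal increase of $b_{\mathrm{eff}}$ from adding a witness diminishes as $n\to\infty$.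
   Context: For a finite simple undirected graph $G=(V,E)$ and $\delta\in(0,1)$: $v^G(S):=\sum_{i\in S}\sum_{j\in S,\,j\neq i}\delta^{t_{ij}(G[S])}$ for $S\subseteq V$, where $t_{ij}(G[S])$ is the distance in the induced subgraph ($\infty$ if disconnected, $\delta^\infty:=0$). For a conference structure $\mathcal H$ and $C\subseteq V$, $C/\mathcal H$ is the partition of $C$ into classes connected via chains of pairwise-intersecting members of $\mathcal H$ contained in $C$; $r^{v^G}_{\mathcal H}(C):=\sum_{B\in C/\mathcal H}v^G(B)$; for $X\subseteq V$, $\mathcal H|_X:=\{H\in\mathcal H:H\subseteq X\}$. $\mu_j(X;u)$ denotes the Shapley value of player $j$ in the TU game $u$ on player set $X$. Bargaining-power components: $b^j_i:=\mu_j(V;r^{v^G}_{\mathcal H})-\mu_j(V\setminus\{i\};r^{v^G}_{\mathcal H|_{V\setminus\{i\}}})$. Effective bias with sender $S$, receiver $R$, witness set $W$: $b_{\mathrm{eff}}:=\bigl(b^S_R+\sum_{w\in W}(b^S_w+b^w_R)\bigr)/(|W|+1)$. For $b>0$, $N(b)$ denotes the unique integer $N\ge1$ with $\beta(N)\le b<\beta(N-1)$, where $\beta(N)=\frac1{2N(N+1)}$ and $\beta(0)=+\infty$; $N$ is non-increasing in $b$. *)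

(* Defs.v *)
From HB Require Import structures.
From mathcomp Require Import all_boot all_order all_algebra.
From mathcomp Require Import all_classical all_reals all_analysis.
Set Implicit Arguments. Unset Strict Implicit. Unset Printing Implicit Defensive.
Import Order.TTheory GRing.Theory Num.Theory.
Local Open Scope ring_scope.

Section Defs.
Variable R : realType.
Variable T : finType.

Fixpoint walkn (e : rel T) (S : {set T}) (n : nat) (i j : T) : bool :=
  match n with
  | 0 => (i \in S) && (i == j)
  | n'.+1 => (i \in S) && [exists k, e i k && walkn e S n' k j]
  end.

(* delta^(t_ij(G[S])), with t_ij the distance in G[S] (the least n with a
   walk of length n), and delta^oo = 0 when i, j are disconnected in G[S].
   Distances in a graph on #|T| vertices are < #|T|. *)
Definition dpow (delta : R) (e : rel T) (S : {set T}) (i j : T) : R :=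
  let m := find (fun n => walkn e S n i j) (iota 0 #|T|) in
  if (m < #|T|)%N then delta ^+ m else 0.

Definition vG (delta : R) (e : rel T) (S : {set T}) : R :=
  \sum_(i in S) \sum_(j in S | j != i) dpow delta e S i j.

Definition hrel (Hs : {set {set T}}) (C : {set T}) : rel T :=
  fun x y => [exists H in Hs, [&& H \subset C, x \in H & y \in H]].

(* C/Hs : classes of C connected via chains of pairwise-intersecting
   members of Hs contained in C (uncovered points are singleton classes) *)
Definition cpart (Hs : {set {set T}}) (C : {set T}) : {set {set T}} :=
  [set [set y | connect (hrel Hs C) x y] | x in C].

Definition rgame (delta : R) (e : rel T) (Hs : {set {set T}}) (C : {set T}) : R :=
  \sum_(B in cpart Hs C) vG delta e B.

Definition restrictH (Hs : {set {set T}}) (X : {set T}) : {set {set T}} :=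
  [set H in Hs | H \subset X].

Definition shapley (j : T) (X : {set T}) (u : {set T} -> R) : R :=
  \sum_(S in powerset (X :\ j))
     (((#|S|)`! * (#|X| - #|S| - 1)`!)%:R / ((#|X|)`!)%:R) * (u (j |: S) - u S).

Definition bcomp (delta : R) (e : rel T) (Hs : {set {set T}}) (j i : T) : R :=
  shapley j [set: T] (rgame delta e Hs)
  - shapley j (~: [set i]) (rgame delta e (restrictH Hs (~: [set i]))).

Definition beff (delta : R) (e : rel T) (Hs : {set {set T}}) (S Rc : T)
    (W : {set T}) : R :=
  (bcomp delta e Hs S Rc
   + \sum_(w in W) (bcomp delta e Hs S w + bcomp delta e Hs w Rc))
  / (#|W|.+1)%:R.

Definition star_rel (h : T) : rel T :=
  fun x y => ((x == h) && (y != h)) || ((y == h) && (x != h)).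

Definition star_H (h : T) : {set {set T}} :=
  [set [set x; y] | x in T, y in T & star_rel h x y].

Definition hub_leaf (h S Rc : T) : bool :=
  ((S == h) && (Rc != h)) || ((Rc == h) && (S != h)).

Definition beff_star (delta : R) (h S Rc : T) : R :=
  beff delta (star_rel h) (star_H h) S Rc (~: [set S; Rc]).

End Defs.

(* beta(N) = 1/(2N(N+1)) for N >= 1, beta(0) = +oo *)
Definition betaN (R : realType) (N : nat) : R := ((2 * N * N.+1)%N%:R)^-1.

Definition isN (R : realType) (b : R) (N : nat) : Prop :=
  (1 <= N)%N /\ betaN R N <= b /\ (N = 1%N \/ b < betaN R N.-1).

Definition fkd (R : realType) (k delta : R) : R :=
  2 * (k + 1) * (k - 1) / (3 * k) * delta ^+ 2.

(* Main.v *)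
Require Import Defs.
From HB Require Import structures.
From mathcomp Require Import all_boot all_order all_algebra.
From mathcomp Require Import all_classical all_reals all_analysis.
Import Order.TTheory GRing.Theory Num.Theory.
Import numFieldNormedType.Exports.
Local Open Scope ring_scope.
Set Implicit Arguments. Unset Strict Implicit. Unset Printing Implicit Defensive.
From mathcomp Require Import zify ring lra.
Lemma sum_by_card (R : realType) (T : finType) (A : {set T}) (F : nat -> R) :
  \sum_(S in powerset A) F #|S| = \sum_(s < #|A|.+1) F s *+ 'C(#|A|, s).
Proof.
rewrite (partition_big (fun S : {set T} => (inord #|S| : 'I_#|A|.+1)) xpredT) //=.
apply: eq_bigr => s _.
rewrite (eq_bigr (fun _ => F s)); last first.
  move=> S /andP[SA /eqP <-]; rewrite inordK // ltnS subset_leq_card //.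
  by rewrite -powersetE.
rewrite sumr_const -cards_draws; congr (_ *+ _); apply: eq_card => S.
rewrite [RHS]inE unfold_in /= powersetE; case SA: (S \subset A) => //=.
apply/eqP/eqP => [<-|->]; last by apply/val_inj; rewrite /= inordK.
by rewrite inordK // ltnS subset_leq_card.
Qed.
Lemma powerset_split (R : realType) (T : finType) (A : {set T}) (h : T)
  (F : {set T} -> R) : h \in A ->
  \sum_(S in powerset A) F S = \sum_(S in powerset (A :\ h)) (F S + F (h |: S)).
Proof.
move=> hA; rewrite big_split /=.
rewrite [LHS](bigID (fun S : {set T} => h \in S)) /= addrC.
congr (_ + _).
  apply: eq_bigl => S; rewrite !powersetE subsetD1; case: (S \subset A) => //.
rewrite (reindex_onto (fun S' => h |: S') (fun S => S :\ h)) /=; last first.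
  by move=> S /andP[_ hS]; rewrite finset.setD1K.
apply: eq_bigl => S; rewrite !powersetE setU11 andbT.
apply/andP/idP => [[hSA /eqP <-]|SA].
  exact: finset.setSD.
move: (SA); rewrite subsetD1 => /andP[SA' hS]; split.
  by rewrite finset.subUset finset.sub1set hA SA'.
by rewrite finset.setU1K.
Qed.
Lemma starH_hub (T : finType) (h : T) H : H \in star_H h -> h \in H.
Proof.
case/imset2P => x y _; rewrite inE /star_rel => /orP[] /andP[/eqP-> _] ->;
  by rewrite !inE eqxx ?orbT.
Qed.

Lemma starH_mem (T : finType) (h z : T) : z != h -> [set h; z] \in star_H h.
Proof.
move=> zh; apply/imset2P; exists h z => //; rewrite inE /star_rel eqxx /=.
by rewrite zh.
Qed.
Lemma hrel_in (T : finType) (h : T) (Hs : {set {set T}}) (C : {set T}) x y :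
  (forall H, H \in Hs -> h \in H) ->
  hrel Hs C x y -> [&& h \in C, x \in C & y \in C].
Proof.
move=> P1 /existsP[H /andP[HHs /and3P[HC xH yH]]].
by rewrite !(fintype.subsetP HC) // P1.
Qed.

Lemma connect_in (T : finType) (h : T) (Hs : {set {set T}}) (C : {set T}) x y :
  (forall H, H \in Hs -> h \in H) -> x \in C ->
  connect (hrel Hs C) x y -> y \in C.
Proof.
move=> P1 xC /connectP[p pth ->]; elim: p x xC pth => //= z p IH x xC /andP[e pz].
apply: (IH z) => //; by case/and3P: (hrel_in P1 e).
Qed.

Lemma connect_noh (T : finType) (h : T) (Hs : {set {set T}}) (C : {set T}) x y :
  (forall H, H \in Hs -> h \in H) -> h \notin C ->
  connect (hrel Hs C) x y -> y = x.
Proof.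
move=> P1 hC /connectP[[|z p] /= pth ->] //.
by case/andP: pth => /(hrel_in P1) /andP[hC' _]; rewrite hC' in hC.
Qed.

Lemma vG1 (R : realType) (T : finType) (delta : R) e (x : T) :
  vG delta e [set x] = 0.
Proof.
rewrite /vG big1 // => i /set1P ->; rewrite big1 // => j /andP[/set1P ->].
by rewrite eqxx.
Qed.

Lemma cpart_h (T : finType) (h : T) (Hs : {set {set T}}) (C : {set T}) :
  (forall H, H \in Hs -> h \in H) ->
  (forall z, z \in C -> z != h -> [set h; z] \in Hs) -> h \in C ->
  cpart Hs C = [set C].
Proof.
move=> P1 P2 hC.
have cls : forall x, x \in C -> [set y | connect (hrel Hs C) x y] = C.
  move=> x xC; apply/setP => y; rewrite inE; apply/idP/idP; first exact: (connect_in P1 xC).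
  move=> yC.
  have ch : forall z, z \in C -> connect (hrel Hs C) z h.
    move=> z zC; have [->|zh] := eqVneq z h; first exact: connect0.
    apply: connect1; apply/existsP; exists [set h; z]; rewrite P2 //=.
    rewrite !inE !eqxx orbT /= andbT.
    by apply/fintype.subsetP => w /set2P[]->.
  apply: connect_trans (ch x xC) _.
  have [->|yh] := eqVneq y h; first exact: connect0.
  apply: connect1; apply/existsP; exists [set h; y]; rewrite P2 //=.
  rewrite !inE !eqxx orbT /= andbT.
  by apply/fintype.subsetP => w /set2P[]->.
apply/setP => B; rewrite !inE; apply/imsetP/eqP => [[x xC ->]|->]; first exact: cls.
by exists h => //; rewrite cls.
Qed.
Lemma find_iota3 (p : pred nat) N : find p (iota 0 N.+3) =
  if p 0%N then 0%N else if p 1%N then 1%N else if p 2%N then 2%N else (find p (iota 3 N)).+3.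
Proof. by rewrite /=; case: (p 0%N); case: (p 1%N); case: (p 2%N). Qed.

Lemma dpow_star (R : realType) (T : finType) (delta : R) (h : T) (C : {set T}) i j :
  (2 < #|T|)%N -> h \in C -> i \in C -> j \in C -> i != j ->
  dpow delta (star_rel h) C i j = if (i == h) || (j == h) then delta else delta ^+ 2.
Proof.
move=> T3 hC iC jC ij.
have p0 : walkn (star_rel h) C 0 i j = false by rewrite /= (negbTE ij) andbF.
have p1 : walkn (star_rel h) C 1 i j = (i == h) || (j == h).
  rewrite /= iC /=; apply/existsP/idP => [[k /andP[e /andP[_ /eqP kj]]]|H].
    move: e; rewrite /star_rel kj => /orP[]/andP[->]//; by rewrite orbT.
  exists j; rewrite jC eqxx !andbT /star_rel.
  case/orP: H => /eqP E.
    by apply/orP; left; rewrite E eqxx /=; move: ij; rewrite E eq_sym.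
  by apply/orP; right; rewrite E eqxx /=; move: ij; rewrite E.
have p2 : ~~ ((i == h) || (j == h)) -> walkn (star_rel h) C 2 i j.
  case/norP => ih jh; rewrite /= iC /=; apply/existsP; exists h.
  apply/and3P; split => //; first by rewrite /star_rel eqxx ih /= orbT.
  apply/existsP; exists j.
  by rewrite /star_rel jC !eqxx jh.
have [N TN] : exists N, #|T| = N.+3 by exists (#|T| - 3)%N; lia.
rewrite /dpow TN find_iota3 p0 p1.
case: ((i == h) || (j == h)) p2 => [_|/(_ isT) ->] //=.
Qed.
Definition Gv (R : realType) (delta : R) (m : nat) : R :=
  2 * m%:R * delta + m%:R * (m%:R - 1) * delta ^+ 2.

Lemma vG_star (R : realType) (T : finType) (delta : R) (h : T) (C : {set T}) :
  (2 < #|T|)%N -> h \in C -> vG delta (star_rel h) C = Gv delta #|C|.-1.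
Proof.
move=> T3 hC.
have cC : #|C| = (#|C :\ h|).+1 by rewrite (cardsD1 h C) hC.
have inner : forall i, i \in C ->
  \sum_(j in C | j != i) dpow delta (star_rel h) C i j =
  if i == h then delta *+ #|C :\ h| else delta + delta ^+ 2 *+ (#|C :\ h|).-1.
  move=> i iC.
  rewrite (eq_bigr (fun j => if (i == h) || (j == h) then delta else delta ^+ 2)); last first.
    by move=> j /andP[jC ji]; rewrite dpow_star // eq_sym.
  have [ih|ih] := eqVneq i h.
    rewrite (eq_bigl (fun j => j \in C :\ h)); last by move=> j; rewrite !inE andbC ih.
    by rewrite (eq_bigr (fun _ => delta)) ?sumr_const.
  rewrite (bigD1 h) /=; last by rewrite hC eq_sym ih.
  rewrite eqxx; congr (_ + _).
  rewrite (eq_bigl (fun j => j \in C :\ i :\ h)); last first.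
    by move=> j; rewrite !inE; case: (j \in C); case: (j == i); case: (j == h).
  rewrite (eq_bigr (fun _ => delta ^+ 2)) ?sumr_const; last first.
    by move=> j; rewrite !inE => /andP[/negbTE -> _].
  congr (_ *+ _).
  have : #|C :\ i| = (#|C :\ i :\ h|).+1 by rewrite (cardsD1 h (C :\ i)) !inE eq_sym ih hC.
  have : #|C| = (#|C :\ i|).+1 by rewrite (cardsD1 i C) iC.
  by rewrite cC => -[->] ->.
rewrite /vG (bigD1 h) //= inner // eqxx.
rewrite (eq_bigr (fun _ => delta + delta ^+ 2 *+ (#|C :\ h|).-1)); last first.
  by move=> i /andP[iC ih]; rewrite inner // (negbTE ih).
rewrite (eq_bigl (fun j => j \in C :\ h)) ?sumr_const; last by move=> j; rewrite !inE; case: (j \in C); case: (j == h).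
rewrite cC /= /Gv.
case: #|C :\ h| => [|m]; first by rewrite !mulr0n mulr0 !mul0r addr0.
rewrite /= -[delta *+ _]mulr_natr -[delta ^+ 2 *+ _]mulr_natr -[(_ + _) *+ _]mulr_natr.
ring.
Qed.
Lemma rgame_star (R : realType) (T : finType) (delta : R) (h : T)
  (Hs : {set {set T}}) (C : {set T}) :
  (2 < #|T|)%N -> (forall H, H \in Hs -> h \in H) ->
  (h \in C -> forall z, z \in C -> z != h -> [set h; z] \in Hs) ->
  rgame delta (star_rel h) Hs C = if h \in C then Gv delta #|C|.-1 else 0.
Proof.
move=> T3 P1 P2; rewrite /rgame; case: ifP => hC.
  by rewrite (cpart_h P1 (P2 hC) hC) big_set1 vG_star.
apply: big1 => B /imsetP[x xC ->].
have -> : [set y | connect (hrel Hs C) x y] = [set x].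
  apply/setP => y; rewrite !inE; apply/idP/eqP => [|->]; last exact: connect0.
  by apply: connect_noh P1 _; rewrite hC.
exact: vG1.
Qed.

Lemma u_full (R : realType) (T : finType) (delta : R) (h : T) (C : {set T}) :
  (2 < #|T|)%N ->
  rgame delta (star_rel h) (star_H h) C = if h \in C then Gv delta #|C|.-1 else 0.
Proof.
move=> T3; apply: rgame_star => //; first exact: starH_hub.
by move=> _ z _; apply: starH_mem.
Qed.

Lemma u_restr (R : realType) (T : finType) (delta : R) (h : T) (X C : {set T}) :
  (2 < #|T|)%N -> C \subset X ->
  rgame delta (star_rel h) (restrictH (star_H h) X) C =
    if h \in C then Gv delta #|C|.-1 else 0.
Proof.
move=> T3 CX; apply: rgame_star => //.
  by move=> H; rewrite inE => /andP[/starH_hub].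
move=> hC z zC zh; rewrite inE starH_mem //=.
by apply/fintype.subsetP => w /set2P[]->; apply: (fintype.subsetP CX).
Qed.
Lemma sumGv (R : realType) (delta : R) (m : nat) :
  \sum_(s < m.+1) Gv delta s =
  m%:R * (m%:R + 1) * delta + (m%:R + 1) * m%:R * (m%:R - 1) / 3 * delta ^+ 2.
Proof.
elim: m => [|m IH]; first by rewrite big_ord1 /Gv /=; field.
rewrite big_ord_recr /= IH /Gv; by field.
Qed.

Lemma sumGvL (R : realType) (delta : R) (n : nat) :
  \sum_(s < n) (s.+1)%:R * (Gv delta s.+1 - Gv delta s) =
  n%:R * (n%:R + 1) * delta + 2 * (n%:R - 1) * n%:R * (n%:R + 1) / 3 * delta ^+ 2.
Proof.
elim: n => [|n IH]; first by rewrite big_ord0; field.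
rewrite big_ord_recr /= IH /Gv; by field.
Qed.

Lemma weightH (R : realType) (m s : nat) : (s <= m)%N ->
  ((s`! * (m.+1 - s - 1)`!)%:R / ((m.+1)`!)%:R : R) *+ 'C(m, s) = (m.+1%:R)^-1.
Proof.
move=> sm; have -> : (m.+1 - s - 1 = m - s)%N by lia.
rewrite -[_ *+ _]mulr_natr mulrAC -natrM mulnC bin_fact // factS natrM.
have f0 : (m`!)%:R != 0 :> R by rewrite pnatr_eq0 -lt0n fact_gt0.
by field; rewrite f0 andbT nat1r pnatr_eq0.
Qed.

Lemma weightL (R : realType) (m s : nat) : (s <= m)%N ->
  (((s.+1)`! * (m.+2 - s.+1 - 1)`!)%:R / ((m.+2)`!)%:R : R) *+ 'C(m, s)
   = s.+1%:R / (m.+2%:R * m.+1%:R).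
Proof.
move=> sm; have -> : (m.+2 - s.+1 - 1 = m - s)%N by lia.
have f0 : (m`!)%:R != 0 :> R by rewrite pnatr_eq0 -lt0n fact_gt0.
have f1 : (s`!)%:R != 0 :> R by rewrite pnatr_eq0 -lt0n fact_gt0.
have f2 : ((m - s)`!)%:R != 0 :> R by rewrite pnatr_eq0 -lt0n fact_gt0.
have B : ('C(m, s)%:R : R) = (m`!)%:R / ((s`!)%:R * ((m - s)`!)%:R).
  by rewrite -(bin_fact sm) !natrM; field; rewrite f1 f2.
rewrite -[_ *+ _]mulr_natr B !factS !natrM.
have m0 := ler0n R m.
have g1 : 1 + m%:R != 0 :> R by apply: lt0r_neq0; lra.
have g2 : 2 + m%:R != 0 :> R by apply: lt0r_neq0; lra.
by field; rewrite f0 f1 f2 g1 g2.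
Qed.
Definition phiH (R : realType) (delta : R) (m : nat) : R :=
  m%:R * delta + m%:R * (m%:R - 1) / 3 * delta ^+ 2.
Definition phiL (R : realType) (delta : R) (m : nat) : R :=
  delta + 2 * (m%:R - 1) / 3 * delta ^+ 2.

Lemma shap_hub (R : realType) (T : finType) (delta : R) (h : T) (X : {set T})
  (u : {set T} -> R) : h \in X ->
  (forall C : {set T}, C \subset X -> u C = if h \in C then Gv delta #|C|.-1 else 0) ->
  shapley h X u = phiH delta #|X|.-1.
Proof.
move=> hX Hu; rewrite /shapley.
have cX : #|X| = (#|X :\ h|).+1 by rewrite (cardsD1 h X) hX.
rewrite (eq_bigr (fun S : {set T} => (((#|S|)`! * (#|X| - #|S| - 1)%N`!)%:R / ((#|X|)`!)%:R)
                            * Gv delta #|S|)); last first.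
  move=> S; rewrite powersetE => SX.
  have hS : h \notin S by apply/negP => /(fintype.subsetP SX); rewrite !inE eqxx.
  have SX' : S \subset X by exact: (fintype.subset_trans SX (finset.subD1set X h)).
  rewrite (Hu (h |: S)); last by rewrite finset.subUset finset.sub1set hX SX'.
  by rewrite (Hu S SX') (negbTE hS) finset.setU11 cardsU1 hS add1n subr0.
rewrite (sum_by_card _ (fun s => ((s`! * (#|X| - s - 1)%N`!)%:R / ((#|X|)`!)%:R)
                            * Gv delta s)).
rewrite cX /=.
rewrite (eq_bigr (fun s : 'I__ => (#|X :\ h|.+1%:R)^-1 * Gv delta s)); last first.
  by move=> s _; rewrite -mulrnAl weightH // -ltnS.
by rewrite -mulr_sumr sumGv /phiH; field.
Qed.
Lemma shap_leaf (R : realType) (T : finType) (delta : R) (h j : T) (X : {set T})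
  (u : {set T} -> R) : h \in X -> j \in X -> j != h ->
  (forall C : {set T}, C \subset X -> u C = if h \in C then Gv delta #|C|.-1 else 0) ->
  shapley j X u = phiL delta #|X|.-1.
Proof.
move=> hX jX jh Hu; rewrite /shapley.
have hXj : h \in X :\ j by rewrite !inE eq_sym jh hX.
have cX : #|X| = (#|X :\ j :\ h|).+2.
  by rewrite (cardsD1 j X) jX (cardsD1 h (X :\ j)) hXj.
rewrite (powerset_split _ hXj).
rewrite (eq_bigr (fun S : {set T} => ((((#|S|).+1)`! * (#|X| - (#|S|).+1 - 1)%N`!)%:R
     / ((#|X|)`!)%:R) * (Gv delta (#|S|).+1 - Gv delta #|S|))); last first.
  move=> S; rewrite powersetE => SX.
  have hS : h \notin S by apply/negP => /(fintype.subsetP SX); rewrite !inE eqxx.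
  have jS : j \notin S by apply/negP => /(fintype.subsetP SX); rewrite !inE eqxx /= andbF.
  have SX' : S \subset X.
    exact: (fintype.subset_trans SX (fintype.subset_trans (finset.subD1set _ h) (finset.subD1set X j))).
  have hjS : j \notin h |: S by rewrite !inE negb_or jh jS.
  rewrite (Hu S SX') (negbTE hS) (Hu (j |: S)); last first.
    by rewrite finset.subUset finset.sub1set jX SX'.
  rewrite !inE (negbTE hS) orbF eq_sym (negbTE jh) subr0 mulr0 add0r.
  rewrite (Hu (h |: S)); last by rewrite finset.subUset finset.sub1set hX SX'.
  rewrite (Hu (j |: (h |: S))); last first.
    by rewrite !finset.subUset !finset.sub1set jX hX SX'.
  rewrite !inE !eqxx !orbT /= (cardsU1 j) hjS (cardsU1 h) hS.
  by rewrite !add1n.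
rewrite (sum_by_card _ (fun s => ((s.+1`! * (#|X| - s.+1 - 1)%N`!)%:R / ((#|X|)`!)%:R)
                            * (Gv delta s.+1 - Gv delta s))).
rewrite cX /=.
rewrite (eq_bigr (fun s : 'I__ => ((#|X :\ j :\ h|.+2%:R * #|X :\ j :\ h|.+1%:R)^-1) *
    (s.+1%:R * (Gv delta s.+1 - Gv delta s)))); last first.
  move=> s _; rewrite -mulrnAl weightL //; last by rewrite -ltnS.
  by rewrite mulrA [_ * _^-1]mulrC.
rewrite -mulr_sumr sumGvL /phiL.
have m0 := ler0n R #|X :\ j :\ h|.
have g1 : 1 + #|X :\ j :\ h|%:R != 0 :> R by apply: lt0r_neq0; lra.
have g2 : 2 + #|X :\ j :\ h|%:R != 0 :> R by apply: lt0r_neq0; lra.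
by field; rewrite g1 g2.
Qed.
Lemma shap_nohub (R : realType) (T : finType) (delta : R) (h j : T) (X : {set T})
  (u : {set T} -> R) : h \notin X -> j \in X ->
  (forall C : {set T}, C \subset X -> u C = if h \in C then Gv delta #|C|.-1 else 0) ->
  shapley j X u = 0.
Proof.
move=> hX jX Hu; rewrite /shapley big1 // => S; rewrite powersetE => SX.
have SX' : S \subset X by exact: (fintype.subset_trans SX (finset.subD1set X j)).
have jSX : j |: S \subset X by rewrite finset.subUset finset.sub1set jX SX'.
rewrite (Hu _ SX') (Hu _ jSX).
have nh : forall C : {set T}, C \subset X -> h \in C = false.
  by move=> C CX; apply/negbTE/negP => /(fintype.subsetP CX); apply/negP.
by rewrite (nh _ SX') (nh _ jSX) subrr mulr0.
Qed.

Lemma cardC1' (T : finType) (i : T) : #|~: [set i]| = #|T|.-1.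
Proof. by rewrite cardsCs finset.setCK cards1 subn1. Qed.

Lemma b_hub_leaf (R : realType) (T : finType) (delta : R) (h i : T) n :
  #|T| = n.+3 -> i != h ->
  bcomp delta (star_rel h) (star_H h) h i = phiH delta n.+2 - phiH delta n.+1.
Proof.
move=> TN ih; have T3 : (2 < #|T|)%N by rewrite TN.
rewrite /bcomp (@shap_hub R T delta h [set: T]%SET) ?inE //; last first.
  by move=> C _; apply: u_full.
rewrite (@shap_hub R T delta h (~: [set i])) ?inE 1?eq_sym //; last first.
  by move=> C CX; apply: u_restr.
by rewrite cardsT cardC1' TN.
Qed.

Lemma b_leaf_hub (R : realType) (T : finType) (delta : R) (h j : T) n :
  #|T| = n.+3 -> j != h ->
  bcomp delta (star_rel h) (star_H h) j h = phiL delta n.+2.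
Proof.
move=> TN jh; have T3 : (2 < #|T|)%N by rewrite TN.
rewrite /bcomp (@shap_leaf R T delta h j [set: T]%SET) ?inE //; last first.
  by move=> C _; apply: u_full.
rewrite (@shap_nohub R T delta h j (~: [set h])) ?inE ?eqxx //; last first.
  by move=> C CX; apply: u_restr.
by rewrite cardsT TN subr0.
Qed.

Lemma b_leaf_leaf (R : realType) (T : finType) (delta : R) (h j i : T) n :
  #|T| = n.+3 -> j != h -> i != h -> j != i ->
  bcomp delta (star_rel h) (star_H h) j i = phiL delta n.+2 - phiL delta n.+1.
Proof.
move=> TN jh ih ji; have T3 : (2 < #|T|)%N by rewrite TN.
rewrite /bcomp (@shap_leaf R T delta h j [set: T]%SET) ?inE //; last first.
  by move=> C _; apply: u_full.
have hi : h != i by rewrite eq_sym.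
rewrite (@shap_leaf R T delta h j (~: [set i])) ?inE ?hi ?ji //; last first.
  by move=> C CX; apply: u_restr.
by rewrite cardsT cardC1' TN.
Qed.
Lemma beff_formula (R : realType) (T : finType) (delta : R) (h S Rc : T) n :
  #|T| = n.+3 -> hub_leaf h S Rc ->
  beff_star delta h S Rc = delta + fkd (n.+2)%:R delta.
Proof.
move=> TN hl; rewrite /beff_star /beff.
have SR : S != Rc.
  by case/orP: hl => /andP[/eqP -> ?]; [rewrite eq_sym | ].
have cW : #|~: [set S; Rc]| = n.+1.
  by rewrite cardsCs finset.setCK cards2 SR TN.
rewrite cW.
have m0 := ler0n R n.
have g1 : 1 + n%:R != 0 :> R by apply: lt0r_neq0; lra.
have g2 : 2 + n%:R != 0 :> R by apply: lt0r_neq0; lra.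
have g3 : 3 + n%:R != 0 :> R by apply: lt0r_neq0; lra.
case/orP: hl => /andP[/eqP E Rh].
  rewrite E in SR cW *.
  rewrite (b_hub_leaf _ TN Rh).
  rewrite (eq_bigr (fun _ => (phiH delta n.+2 - phiH delta n.+1) +
             (phiL delta n.+2 - phiL delta n.+1))); last first.
    move=> w; rewrite !inE negb_or => /andP[wh wR].
    by rewrite (b_hub_leaf _ TN wh) (b_leaf_leaf _ TN wh Rh wR).
  rewrite sumr_const cW -[_ *+ n.+1]mulr_natr /phiH /phiL /fkd.
  by field; rewrite ?g1 ?g2 ?g3.
rewrite E in SR cW *.
rewrite (b_leaf_hub _ TN Rh).
rewrite (eq_bigr (fun _ => (phiL delta n.+2 - phiL delta n.+1) +
           phiL delta n.+2)); last first.
  move=> w; rewrite !inE negb_or => /andP[wS wh].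
  by rewrite (b_leaf_leaf _ TN Rh wh) 1?eq_sym // (b_leaf_hub _ TN wh).
rewrite sumr_const cW -[_ *+ n.+1]mulr_natr /phiH /phiL /fkd.
by field; rewrite ?g1 ?g2 ?g3.
Qed.
Lemma fkdE (R : realType) (delta k : R) :
  fkd k delta = (2 * delta ^+ 2 / 3) * (k - k^-1).
Proof.
have [->|k0] := eqVneq k 0.
  by rewrite /fkd !(mulr0, invr0, subrr, mul0r).
rewrite /fkd; by field.
Qed.

Lemma D1 (R : realType) (c y : R) : y != 0 ->
  is_derive y 1 (fun k : R => c * (k - k^-1)) (c * (1 + y ^- 2)).
Proof.
move=> y0.
have H1 := @is_deriveV R id y 1 1 y0 (is_derive_id y 1).
have H2 := is_deriveB (is_derive_id y 1) H1.
have H3 := is_deriveZ c H2.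
match type of H3 with is_derive _ _ ?f _ =>
  have E : (fun k : R => c * (k - k^-1)) = f by apply/funext => k end.
rewrite E; apply: is_derive_eq H3 _.
change (c * (1 - (- y ^- 2) * 1) = c * (1 + y ^- 2)).
by rewrite mulr1 opprK.
Qed.
Lemma D2 (R : realType) (c y : R) : y != 0 ->
  is_derive y 1 (fun k : R => c * (1 + k ^- 2)) (c * (- 2 / y ^+ 3)).
Proof.
move=> y0.
have y20 : (@id R ^+ 2) y != 0 by rewrite /= mulf_neq0.
have Hx := is_deriveX 2 (is_derive_id y (1:R)).
have H1 := @is_deriveV R _ y _ 1 y20 Hx.
have H2 := is_deriveD (is_derive_cst (1:R) y 1) H1.
have H3 := is_deriveZ c H2.
match type of H3 with is_derive _ _ ?f _ =>
  have E : (fun k : R => c * (1 + k ^- 2)) = f by apply/funext => k end.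
rewrite E; apply: is_derive_eq H3 _.
change (c * (0 + - (y ^+ 2) ^- 2 * ((2 * y ^+ 1) * 1)) = c * (-2 / y ^+ 3)).
by field.
Qed.
Lemma part3 (R : realType) (delta : R) (hd0 : 0 < delta) (x : R) : 1 <= x ->
        derivable (fun k : R => fkd k delta) x 1
        /\ 0 < derive1 (fun k : R => fkd k delta) x
        /\ derivable (derive1 (fun k : R => fkd k delta)) x 1
        /\ derive1n 2 (fun k : R => fkd k delta) x < 0.
Proof.
move=> x1.
set c := 2 * delta ^+ 2 / 3.
have c0 : 0 < c by rewrite /c divr_gt0 // mulr_gt0 // exprn_gt0.
have FE : (fun k : R => fkd k delta) = (fun k : R => c * (k - k^-1)).
  by apply/funext => k; rewrite fkdE.
rewrite FE.
have x0 : 0 < x by lra.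
have xn0 : x != 0 := lt0r_neq0 x0.
have Dy : forall y : R, 0 < y -> derive1 (fun k : R => c * (k - k^-1)) y = c * (1 + y ^- 2).
  move=> y y0; rewrite derive1E; by have := D1 c (lt0r_neq0 y0); case => _ ->.
have near1 : \forall y \near x, c * (1 + y ^- 2) = derive1 (fun k : R => c * (k - k^-1)) y.
  near=> z; rewrite Dy //; near: z; exact: lt_nbhsr.
split; first by have := D1 c xn0; case.
split.
  have xi : 0 < x ^- 2 by rewrite invr_gt0 exprn_gt0.
  rewrite Dy // mulr_gt0 //; lra.
split.
  apply: (near_eq_derivable near1).
  by have := D2 c xn0; case.
rewrite derive1nS derive1n1 derive1E -(near_eq_derive _ near1).
have := D2 c xn0; case => _ ->.
by rewrite pmulr_rlt0 // mulNr oppr_lt0 divr_gt0 // exprn_gt0.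
Unshelve. all: by end_near.
Qed.
Lemma fkd_mono (R : realType) (delta : R) (n m : nat) : (n <= m)%N ->
  fkd (n.+2)%:R delta <= fkd (m.+2)%:R delta.
Proof.
move=> nm; rewrite !fkdE.
have c0 : 0 <= 2 * delta ^+ 2 / 3 by rewrite divr_ge0 // mulr_ge0 // sqr_ge0.
apply: ler_wpM2l => //.
have a0 : 0 < (n.+2)%:R :> R by rewrite ltr0n.
have b0 : 0 < (m.+2)%:R :> R by rewrite ltr0n.
have ab : (n.+2)%:R <= (m.+2)%:R :> R by rewrite ler_nat.
have iab : ((m.+2)%:R)^-1 <= ((n.+2)%:R)^-1 :> R by rewrite lef_pV2 ?posrE.
have key : forall a b ia ib : R, a <= b -> ib <= ia -> a - ia <= b - ib.
  by move=> *; lra.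
exact: key.
Qed.

Lemma betaN_anti (R : realType) (a b : nat) : (1 <= a)%N -> (a <= b)%N ->
  betaN R b <= betaN R a.
Proof.
move=> a1 ab; rewrite /betaN lef_pV2 ?posrE ?ltr0n ?ler_nat.
all: nia.
Qed.

Lemma isN_anti (R : realType) (b1 b2 : R) N1 N2 : b1 <= b2 ->
  isN b1 N1 -> isN b2 N2 -> (N2 <= N1)%N.
Proof.
move=> b12 [N11 [B1 _]] [N21 [_ B2]].
rewrite leqNgt; apply/negP => lt12.
case: B2 => [E|B2]; first by move: lt12; rewrite E ltnS leqNgt N11.
have : betaN R N2.-1 <= betaN R N1.
  by apply: betaN_anti => //; rewrite -ltnS prednK // (leq_trans N11 (ltnW lt12)).
lra.
Qed.

Lemma marg (R : realType) (delta : R) (hd0 : 0 < delta) (n : nat) :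
  fkd (n.+4)%:R delta - fkd (n.+3)%:R delta < fkd (n.+3)%:R delta - fkd (n.+2)%:R delta.
Proof.
rewrite !fkdE.
set c := 2 * delta ^+ 2 / 3.
have c0 : 0 < c by rewrite /c divr_gt0 // mulr_gt0 // exprn_gt0.
have a0 := ler0n R n.
have g2 : 2 + n%:R != 0 :> R by apply: lt0r_neq0; lra.
have g3 : 3 + n%:R != 0 :> R by apply: lt0r_neq0; lra.
have g4 : 4 + n%:R != 0 :> R by apply: lt0r_neq0; lra.
rewrite -subr_gt0.
have -> : c * ((n.+3)%:R - ((n.+3)%:R)^-1) - c * ((n.+2)%:R - ((n.+2)%:R)^-1) -
  (c * ((n.+4)%:R - ((n.+4)%:R)^-1) - c * ((n.+3)%:R - ((n.+3)%:R)^-1)) =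
  c * 2 / ((n.+2)%:R * (n.+3)%:R * (n.+4)%:R).
  by field; rewrite ?g2 ?g3 ?g4.
by rewrite divr_gt0 // ?mulr_gt0 ?ltr0n.
Qed.
Lemma card3 (T : finType) : (3 <= #|T|)%N -> exists n, #|T| = n.+3.
Proof. by move=> h; exists (#|T| - 3)%N; lia. Qed.

Theorem proposition3 (R : realType) (delta : R) (hd0 : 0 < delta) (hd1 : delta < 1) :
  (* b_eff = delta + f(k, delta) for every star S_k, k >= 2 *)
  (forall (k : nat) (T : finType) (h S Rc : T),
     (2 <= k)%N -> #|T| = k.+1 -> hub_leaf h S Rc ->
     beff_star delta h S Rc = delta + fkd (k%:R) delta)
  (* f > 0, df/dk > 0, d^2f/dk^2 < 0, k real *)
  /\ (forall x : R, 1 < x -> 0 < fkd x delta)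
  /\ (forall x : R, 1 <= x ->
        derivable (fun k : R => fkd k delta) x 1
        /\ 0 < derive1 (fun k : R => fkd k delta) x
        /\ derivable (derive1 (fun k : R => fkd k delta)) x 1
        /\ derive1n 2 (fun k : R => fkd k delta) x < 0)
  (* N(b_eff) is non-increasing in n = |V| *)
  /\ (forall (T1 T2 : finType) (h1 S1 Rc1 : T1) (h2 S2 Rc2 : T2) (N1 N2 : nat),
        (3 <= #|T1|)%N -> (#|T1| <= #|T2|)%N ->
        hub_leaf h1 S1 Rc1 -> hub_leaf h2 S2 Rc2 ->
        isN (beff_star delta h1 S1 Rc1) N1 -> isN (beff_star delta h2 S2 Rc2) N2 ->
        (N2 <= N1)%N)
  (* the marginal increase of b_eff from adding a witness diminishes in n *)
  /\ (forall (T1 T2 T3 : finType) (h1 S1 Rc1 : T1) (h2 S2 Rc2 : T2) (h3 S3 Rc3 : T3),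
        (3 <= #|T1|)%N -> #|T2| = (#|T1|).+1 -> #|T3| = (#|T2|).+1 ->
        hub_leaf h1 S1 Rc1 -> hub_leaf h2 S2 Rc2 -> hub_leaf h3 S3 Rc3 ->
        beff_star delta h3 S3 Rc3 - beff_star delta h2 S2 Rc2
        < beff_star delta h2 S2 Rc2 - beff_star delta h1 S1 Rc1).
Proof.
split.
  move=> k T h S Rc k2 Tk hl.
  have [n kn] : exists n, k = n.+2 by exists (k - 2)%N; lia.
  by rewrite kn in Tk *; apply: beff_formula.
split.
  move=> x x1; rewrite /fkd.
  apply: mulr_gt0; last exact: exprn_gt0.
  apply: divr_gt0; last lra.
  have h1 : 0 < x + 1 by lra.
  have h2 : 0 < x - 1 by lra.
  by rewrite mulr_gt0 // mulr_gt0.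
split; first by move=> x; apply: part3.
split.
  move=> T1 T2 h1 S1 Rc1 h2 S2 Rc2 N1 N2 T13 T12 hl1 hl2 iN1 iN2.
  have [n1 E1] := card3 T13.
  have [n2 E2] : exists n2, #|T2| = n2.+3 by apply: card3; apply: leq_trans T12.
  apply: (isN_anti _ iN1 iN2).
  rewrite (beff_formula _ E1 hl1) (beff_formula _ E2 hl2) lerD2l.
  by apply: fkd_mono; rewrite E1 E2 in T12.
move=> T1 T2 T3 h1 S1 Rc1 h2 S2 Rc2 h3 S3 Rc3 T13 E21 E32 hl1 hl2 hl3.
have [n E1] := card3 T13.
rewrite E1 in E21; rewrite E21 in E32.
rewrite (beff_formula _ E1 hl1) (beff_formula _ E21 hl2) (beff_formula _ E32 hl3).
have := marg hd0 n.
set a := fkd _ _; set b := fkd _ _; set c := fkd _ _.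
lra.
Qed.
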